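(* Let $d\ge1$, $n\ge2$, and let $G$ be the $d$-dimensional grid graph with all side lengths equal to $n$ (vertex set $\{[x_1,\dots,x_d]\in\mathbb{Z}^d:1\le x_j\le n\}$, vertices adjacent iff they differ in exactly one coordinate by exactly $1$), with normalized Laplacian $\mathfrak{L}=D^{-1/2}(D-S)D^{-1/2}$. For each integer $z$ with $0\le z\le n-1$, the number $$\lambda_{[z]}=2\left(\cos\left(\frac{\pi z}{2(n-1)}\right)\right)^2$$ is an eigenvalue of $\mathfrak{L}$, with corresponding eigenvector $\mathbf{v}_{[z]}$ having components $$(\mathbf{v}_{[z]})_{[x_1,\dots,x_d]}=\sqrt{\deg([x_1,\dots,x_d])}\prod_{j=1}^d(-1)^{x_j}\cos\left(\frac{\pi z}{n-1}(x_j-1)\right),$$ where $\deg([x_1,\dots,x_d])=d+\#\{j: x_j\ne1\text{ and }x_j\ne n\}$ is the degree of the vertex.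
   Context: $S$ is the adjacency matrix and $D$ the diagonal degree matrix of the grid graph. *)

(* Defs.v *)
From HB Require Import structures.
From mathcomp Require Import all_boot all_order all_algebra.
From mathcomp Require Import all_classical all_reals all_analysis.
Set Implicit Arguments. Unset Strict Implicit. Unset Printing Implicit Defensive.
Import Order.TTheory GRing.Theory Num.Theory.
Local Open Scope ring_scope.

(* Vertices of the d-dimensional grid with side n: x : 'I_d -> 'I_n,
   where the coordinate value i : 'I_n stands for the paper's x_j = i + 1. *)
Definition gridV (d n : nat) := {ffun 'I_d -> 'I_n}.

Definition grid_adj (d n : nat) (x y : gridV d n) : bool :=
  [exists j : 'I_d,
     (((x j).+1 == y j) || ((y j).+1 == x j))%N &&
     [forall k : 'I_d, (k != j) ==> (x k == y k)]].

Definition grid_deg (d n : nat) (x : gridV d n) : nat :=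
  #|[set y : gridV d n | grid_adj x y]|.

Definition grid_S (R : realType) (d n : nat) (x y : gridV d n) : R :=
  (grid_adj x y)%:R.
Definition grid_D (R : realType) (d n : nat) (x y : gridV d n) : R :=
  if x == y then (grid_deg x)%:R else 0.

(* normalized Laplacian D^{-1/2} (D - S) D^{-1/2}; since D is diagonal,
   the (x,y) entry of the product is deg(x)^{-1/2} (D - S)_{xy} deg(y)^{-1/2} *)
Definition grid_normLap (R : realType) (d n : nat) (x y : gridV d n) : R :=
  (Num.sqrt (grid_deg x)%:R)^-1 * (grid_D R x y - grid_S R x y)
  * (Num.sqrt (grid_deg y)%:R)^-1.

(* Main.v *)
Require Import Defs.
From HB Require Import structures.
From mathcomp Require Import all_boot all_order all_algebra.
From mathcomp Require Import all_classical all_reals all_analysis.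
From mathcomp Require Import ring lra zify.
Import Order.TTheory GRing.Theory Num.Theory.
Local Open Scope ring_scope.

Section Trig.
Context {R : realType}.

Definition ff (th : R) (i : nat) : R := (-1) ^+ i.+1 * cos (th * i%:R).

Lemma cos_npi k : cos (pi * k%:R) = (-1) ^+ k :> R.
Proof.
elim: k => [|k IH]; first by rewrite mulr0 cos0 expr0.
by rewrite -nat1r mulrDr mulr1 addrC cosDpi IH exprS mulN1r.
Qed.

Lemma sin_npi k : sin (pi * k%:R) = 0 :> R.
Proof.
elim: k => [|k IH]; first by rewrite mulr0 sin0.
by rewrite -nat1r mulrDr mulr1 addrC sinDpi IH oppr0.
Qed.

Lemma ff_I1 th b : ff th b + ff th b.+2 + 2 * cos th * ff th b.+1 = 0.
Proof.
rewrite /ff.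
have -> : th * b.+2%:R = th * b.+1%:R + th by rewrite -(nat1r b.+1); ring.
have -> : th * b%:R = th * b.+1%:R - th by rewrite -(nat1r b); ring.
rewrite cosB cosD !exprS; ring.
Qed.

Lemma ff_I0 th : ff th 1 + cos th * ff th 0 = 0.
Proof. rewrite /ff mulr1 mulr0 cos0 !exprS expr0; ring. Qed.

Lemma ff_In th b z : th * b.+1%:R = pi * z%:R ->
  ff th b + cos th * ff th b.+1 = 0.
Proof.
move=> h; rewrite /ff.
have -> : th * b%:R = th * b.+1%:R - th by rewrite -(nat1r b); ring.
rewrite cosB h cos_npi sin_npi !exprS; ring.
Qed.

Lemma sum_pick n (G : nat -> R) k :
  \sum_(i < n | (i : nat) == k) G i = if (k < n)%N then G k else 0.
Proof.
case: ltnP => hk.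
  rewrite (big_pred1 (Ordinal hk)) //.
by rewrite big_pred0 // => i; apply/negbTE; rewrite neq_ltn (leq_trans (ltn_ord i) hk).
Qed.

Lemma coord_sum th z n a : (2 <= n)%N -> (a < n)%N -> th * (n-1)%:R = pi * z%:R ->
 \sum_(i < n | (a.+1 == i) || (i.+1 == a)) (ff th i + cos th * ff th a) = 0.
Proof.
move=> hn ha hth.
set F := fun i : nat => ff th i + cos th * ff th a.
have -> : \sum_(i < n | (a.+1 == i) || (i.+1 == a)) (ff th i + cos th * ff th a)
  = \sum_(i < n | (i : nat) == a.+1) F i + \sum_(i < n | (i.+1 == a)) F i.
  rewrite [LHS]big_mkcond [X in _ = X + _]big_mkcond [X in _ = _ + X]big_mkcond -big_split /=.
  apply: eq_bigr => i _; rewrite (eq_sym a.+1).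
  case: eqP => e1; case: eqP => e2 //=.
  - exfalso; rewrite e1 in e2; lia.
  - by rewrite addr0.
  - by rewrite add0r.
  - by rewrite addr0.
rewrite sum_pick /F {F}.
case: a ha => [|b] hb.
  rewrite big_pred0 // hn addr0; exact: ff_I0.
rewrite (eq_bigl (fun i : 'I_n => (i : nat) == b)); last by move=> i; exact: eqSS.
rewrite (sum_pick n (fun i => ff th i + cos th * ff th b.+1)).
rewrite (ltn_trans (ltnSn b) hb).
case: ltnP => h2.
  have := ff_I1 th b; lra.
have e : (n - 1 = b.+1)%N by lia.
rewrite e in hth; have := ff_In _ _ _ hth; rewrite ?add0r; lra.
Qed.
End Trig.

Section Grid.
Context {R : realType}.
Context {d n : nat}.

Definition upd (x : gridV d n) (j : 'I_d) (i : 'I_n) : gridV d n :=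
  [ffun k => if k == j then i else x k].
Definition adjj (x y : gridV d n) (j : 'I_d) : bool :=
  (((x j).+1 == y j) || ((y j).+1 == x j))%N &&
  [forall k : 'I_d, (k != j) ==> (x k == y k)].

Lemma adjj_uniq x y j k : adjj x y j -> adjj x y k -> j = k.
Proof.
move=> /andP[h1 /forallP f1] /andP[h2 _].
case: (eqVneq j k) => // ne; exfalso.
have := f1 k; rewrite eq_sym ne /= => /eqP e.
move: h2; rewrite e; case/orP => /eqP; lia.
Qed.

Lemma sum_adj x (F : gridV d n -> R) :
  \sum_(y | grid_adj x y) F y = \sum_j \sum_(y | adjj x y j) F y.
Proof.
rewrite [RHS](exchange_big_dep xpredT) //= [LHS]big_mkcond.
apply: eq_bigr => y _.
case: (boolP (grid_adj x y)) => [/existsP [j0 hj0] | hn].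
  rewrite (big_pred1 j0) // => k; apply/idP/eqP => [h| ->//].
  by symmetry; apply: (@adjj_uniq x y).

rewrite big_pred0 // => k; apply/negP => h; move/negP: hn; apply.
by apply/existsP; exists k.
Qed.

Lemma sum_adjj x j (H : nat -> R) :
  \sum_(y | adjj x y j) H (y j) =
  \sum_(i < n | (((x j).+1 == i) || (i.+1 == x j))%N) H i.
Proof.
rewrite (reindex_onto (upd x j) (fun y => y j)) /=.
  apply: eq_big => [i|i _]; last by rewrite ffunE eqxx.
  have hf : [forall k, (k != j) ==> (x k == upd x j i k)].
    by apply/forallP => k; rewrite ffunE; case: eqP => // _; rewrite eqxx.
  by rewrite /adjj hf ffunE !eqxx !andbT.
move=> y /andP[_ /forallP h]; apply/ffunP => k; rewrite ffunE.
case: (eqVneq k j) => [->|ne] //.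
by have := h k; rewrite ne => /eqP.
Qed.

Lemma prod_split (x : gridV d n) j (f : nat -> R) :
  \prod_k f (x k) = f (x j) * \prod_(k | k != j) f (x k).
Proof. by rewrite (bigD1 j). Qed.

Lemma prod_adjj x y j (f : nat -> R) : adjj x y j ->
  \prod_k f (y k) = f (y j) * \prod_(k | k != j) f (x k).
Proof.
move=> /andP[_ /forallP h]; rewrite (prod_split y j); congr (_ * _).
by apply: eq_bigr => k hk; have := h k; rewrite hk => /eqP ->.
Qed.

Lemma deg_gt0 (hd : (0 < d)%N) (hn : (1 < n)%N) (x : gridV d n) :
  (0 < grid_deg x)%N.
Proof.
rewrite /grid_deg; apply/card_gt0P.
pose j0 := Ordinal hd.
have [i hi] : exists i : 'I_n, (((x j0).+1 == i) || (i.+1 == x j0))%N.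
  case e: (nat_of_ord (x j0)) => [|m].
    by exists (Ordinal hn).
  have hm : (m < n)%N by have := ltn_ord (x j0); rewrite e; lia.
  by exists (Ordinal hm); rewrite /= eqxx orbT.
exists (upd x j0 i); rewrite inE; apply/existsP; exists j0.
rewrite /= ffunE eqxx hi /=.
by apply/forallP => k; rewrite ffunE; case: eqP => // _; rewrite eqxx.
Qed.
End Grid.

Theorem mainTheorem9 (R : realType) (d n : nat) (hd : (1 <= d)%N) (hn : (2 <= n)%N)
  (z : nat) (hz : (z <= n - 1)%N) :
  let lam : R := 2 * (cos (pi * z%:R / (2 * (n - 1)%:R))) ^+ 2 in
  let v : gridV d n -> R := fun x =>
    Num.sqrt (grid_deg x)%:R *
    \prod_(j < d) ((-1) ^+ (x j).+1 * cos (pi * z%:R / (n - 1)%:R * (x j)%:R)) in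
  (exists x : gridV d n, v x != 0) /\
  (forall x : gridV d n, \sum_(y : gridV d n) grid_normLap R x y * v y = lam * v x).
Proof.
move=> lam v.
set th : R := pi * z%:R / (n - 1)%:R.
pose u (x : gridV d n) := \prod_(j < d) ff th (x j).
have hsx : forall x : gridV d n, Num.sqrt (grid_deg x)%:R != 0 :> R.
  move=> x; rewrite sqrtr_eq0 -ltNge ltr0n; exact: deg_gt0.
have hn1 : (n - 1)%:R != 0 :> R by rewrite pnatr_eq0; lia.
have hth : th * (n - 1)%:R = pi * z%:R by rewrite /th mulfVK.
have hlam : lam = 1 + cos th.
  rewrite /lam.
  have -> : th = (pi * z%:R / (2 * (n - 1)%:R)) *+ 2.
    rewrite /th mulr2n; field; exact: hn1.
  rewrite cos_mulr2n mulr2n; ring.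
split.
  have h0 : (0 < n)%N by lia.
  exists [ffun _ => Ordinal h0]; rewrite /v mulf_neq0 //.
  rewrite (eq_bigr (fun _ => -1)); last first.
    by move=> j _; rewrite ffunE /= mulr0 cos0 mulr1 expr1.
  by rewrite prodr_const expf_neq0 // oppr_eq0 oner_eq0.
move=> x.
have hkey : \sum_(y | grid_adj x y) u y = - ((cos th * u x) *+ grid_deg x).
  have hc : forall c : R, \sum_(y | grid_adj x y) c = c *+ grid_deg x.
    by move=> c; rewrite /grid_deg -sumr_const; apply: eq_bigl => y; rewrite inE.
  have h0 : \sum_(y | grid_adj x y) (u y + cos th * u x) = 0.
    rewrite sum_adj; apply: big1 => j _.
    rewrite (eq_bigr (fun y : gridV d n => (ff th (y j) + cos th * ff th (x j)) *
                               \prod_(k | k != j) ff th (x k))); last first.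
      by move=> y hy; rewrite /u (prod_adjj x y j (ff th) hy) (prod_split x j); ring.
    rewrite -big_distrl /= (sum_adjj x j (fun i => ff th i + cos th * ff th (x j))).
    by rewrite (coord_sum th z n (x j) hn (ltn_ord (x j)) hth) mul0r.
  by move: h0; rewrite big_split /= hc => /eqP; rewrite addr_eq0 => /eqP.
have step : forall y, grid_normLap R x y * v y =
   (Num.sqrt (grid_deg x)%:R)^-1 * ((grid_D R x y - grid_S R x y) * u y).
  move=> y; rewrite /grid_normLap /v -/(u y).
  by rewrite -!mulrA (mulrA (Num.sqrt (grid_deg y)%:R)^-1) mulVf // mul1r.
rewrite (eq_bigr _ (fun y _ => step y)) -big_distrr /=.
rewrite (eq_bigr (fun y => grid_D R x y * u y - grid_S R x y * u y)); last first.
  by move=> y _; rewrite mulrBl.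
rewrite sumrB.
have hD : \sum_y grid_D R x y * u y = (grid_deg x)%:R * u x.
  rewrite (bigD1 x) //= big1 ?addr0; first by rewrite /grid_D eqxx.
  by move=> y hy; rewrite /grid_D eq_sym (negbTE hy) mul0r.
have hS : \sum_y grid_S R x y * u y = \sum_(y | grid_adj x y) u y.
  rewrite [RHS]big_mkcond; apply: eq_bigr => y _; rewrite /grid_S.
  by case: (grid_adj x y); rewrite ?mul1r ?mul0r.
rewrite hD hS hkey /v -/(u x) hlam.
have hs : Num.sqrt (grid_deg x)%:R ^+ 2 = (grid_deg x)%:R :> R.
  by rewrite sqr_sqrtr // ler0n.
have hs0 := hsx x.
move: hs hs0; set s := (Num.sqrt (grid_deg x)%:R : R) => hs hs0.
rewrite opprK -[(cos th * u x) *+ _]mulr_natr -hs.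
apply: (mulfI hs0); rewrite mulrA mulfV // mul1r.
ring.
Qed.
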